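(* For every non-trivial projective core $H$ there exist a graph $F$ and two vertices $u^*,v^*\in V(F)$ such that: (a) for all $x,y\in V(H)$ with $x\ne y$ there is a homomorphism $f\colon F\to H$ with $f(u^* )=x$ and $f(v^* )=y$; (b) every homomorphism $f\colon F\to H$ satisfies $f(u^* )\ne f(v^* )$.
   Context: Graphs are finite, undirected, without parallel edges, loops allowed; $K_1^*$ is the one-vertex graph with a loop. A homomorphism is an edge-preserving vertex map. A core is a graph with no homomorphism to a proper subgraph of itself; a core is trivial if isomorphic to $K_1$, $K_1^*$ or $K_2$, non-trivial otherwise. The direct product $H_1\times H_2$ has vertex set $V(H_1)\times V(H_2)$ with $(x_1,y_1)(x_2,y_2)$ an edge iff $x_1x_2\in E(H_1)$ and $y_1y_2\in E(H_2)$; $H^m$ is the $m$-fold product and $\pi_i(x_1,\dots,x_m)=x_i$. A homomorphism $f\colon H^m\to H$ is idempotent if $f(x,\dots,x)=x$ for all $x$. $H$ is projective if for every $m\ge2$ every idempotent homomorphism $H^m\to H$ equals some $\pi_i$. *)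

(* Defs.v *)
From mathcomp Require Import all_boot.
Set Implicit Arguments. Unset Strict Implicit. Unset Printing Implicit Defensive.

Record graph := Graph {
  vert :> finType;
  adj : rel vert;
  adj_sym : symmetric adj }.

Arguments adj {g}.

Definition hom (G H : graph) (f : G -> H) : Prop :=
  forall x y : G, adj x y -> adj (f x) (f y).

Definition isomorphic (G H : graph) : Prop :=
  exists f : G -> H, bijective f /\ forall x y : G, adj (f x) (f y) = adj x y.

(* Core: no homomorphism G -> G' where G' = (A, E) is a proper subgraph of G
   (A a vertex subset, E a symmetric edge set with endpoints in A and E ⊆ E(G),
   and (A, E) differs from G). *)
Definition is_core (G : graph) : Prop :=
  ~ exists (A : {set G}) (E : rel G) (f : G -> G),
      symmetric E /\
      (forall x y, E x y -> [&& x \in A, y \in A & adj x y]) /\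
      (A != setT \/ exists x y, adj x y && ~~ E x y) /\
      (forall x, f x \in A) /\
      (forall x y, adj x y -> E (f x) (f y)).

Lemma K1_sym : symmetric (fun _ _ : 'I_1 => false). Proof. by []. Qed.
Definition K1 : graph := Graph K1_sym.
Lemma K1s_sym : symmetric (fun _ _ : 'I_1 => true). Proof. by []. Qed.
Definition K1star : graph := Graph K1s_sym.
Lemma K2_sym : symmetric (fun x y : 'I_2 => x != y).
Proof. by move=> x y; rewrite eq_sym. Qed.
Definition K2 : graph := Graph K2_sym.

Definition trivial_core (G : graph) : Prop :=
  isomorphic G K1 \/ isomorphic G K1star \/ isomorphic G K2.

Lemma pow_sym (H : graph) (m : nat) :
  symmetric (fun x y : {ffun 'I_m -> H} => [forall i, adj (x i) (y i)]).
Proof.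
move=> x y; apply/forallP/forallP => h i; by rewrite adj_sym.
Qed.
Definition gpow (H : graph) (m : nat) : graph := Graph (@pow_sym H m).

Definition projective (H : graph) : Prop :=
  forall (m : nat) (f : gpow H m -> H), 2 <= m ->
    hom f -> (forall x : H, f [ffun => x] = x) ->
    exists i : 'I_m, forall x : gpow H m, f x = x i.

(* Main.v *)
Require Import Defs.
From mathcomp Require Import all_boot.
From mathcomp Require Import all_fingroup.

Lemma core_inj (H : graph) : is_core H -> forall s : H -> H, hom s -> injective s.
Proof.
move=> Hc s hs.
have: s @: setT = setT.
  apply/eqP; apply/negPn/negP => hA; apply: Hc.
  exists (s @: setT), (fun a b => [&& a \in s @: setT, b \in s @: setT & adj a b]), s.
  split; first by move=> a b; rewrite adj_sym andbCA.
  split; first by [].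
  split; first by left.
  split; first by move=> x; apply: imset_f.
  by move=> x y xy; rewrite !imset_f ?inE // hs.
move=> eA x y sxy.
have /imset_injP hi : #|s @: setT| == #|[set: H]| by rewrite eA.
by apply: hi; rewrite ?inE.
Qed.

Lemma iter_hom (H : graph) (s : H -> H) n : hom s -> hom (iter n s).
Proof. by move=> hs; elim: n => [|n IH] //= x y xy; apply: hs; apply: IH. Qed.

Theorem lemma9 (H : graph) :
  is_core H -> ~ trivial_core H -> projective H ->
  exists (F : graph) (u v : F),
    (forall x y : H, x != y ->
       exists f : F -> H, hom f /\ f u = x /\ f v = y) /\
    (forall f : F -> H, hom f -> f u != f v).
Proof.
move=> Hcore Hntriv Hproj.
have sinj := @core_inj H Hcore.
pose D := [set p : H * H | p.1 != p.2].
pose m := #|D|.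
pose F := gpow H m.
pose u : F := [ffun i => (enum_val i).1].
pose v : F := [ffun i => (enum_val i).2].
exists F, u, v; split.
  move=> x y xy.
  have Dxy : (x, y) \in D by rewrite inE.
  pose i := enum_rank_in Dxy (x, y).
  exists (fun w : F => w i); split; first by move=> a b /forallP.
  by rewrite /u /v !ffunE /i enum_rankK_in.
move=> f homf.
pose x0 := f u.
have m2 : 2 <= m.
  case: (boolP [forall y, y == x0]) => [/forallP all0|].
    exfalso; have e : forall z : H, z = x0 by move=> z; apply/eqP/all0.
    case: (boolP (adj x0 x0)) => a; apply: Hntriv; [right; left| left];
      exists (fun _ => ord0); split.
    - by exists (fun _ => x0) => z; [rewrite -(e z) | rewrite (ord1 z)].
    - by move=> x y; rewrite (e x) (e y) a.
    - by exists (fun _ => x0) => z; [rewrite -(e z) | rewrite (ord1 z)].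
    - by move=> x y; rewrite (e x) (e y) (negbTE a).
  move=> /forallPn [y ny].
  apply/card_gt1P; exists (x0, y), (y, x0); rewrite !inE /= eq_sym ny; split => //.
  by apply/negP => /eqP [] /eqP; rewrite eq_sym (negbTE ny).
pose g0 := fun x : H => f [ffun => x].
have hg0 : hom g0.
  by move=> a b ab; apply: homf; apply/forallP => i; rewrite !ffunE.
have g0inj := sinj _ hg0.
pose s := perm g0inj.
pose k := #[s]%g.
have sE : forall x, s x = g0 x by move=> x; rewrite permE.
have hs : hom s by move=> a b ab; rewrite !sE; apply: hg0.
pose g := fun w : F => iter k.-1 s (f w).
have homg : hom g by move=> a b ab; apply: iter_hom => //; apply: homf.
have kpos : 0 < k by apply: order_gt0.
have itk : forall x, iter k s x = x.
  by move=> x; rewrite -permX expg_order perm1.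
have idem : forall x : H, g [ffun => x] = x.
  move=> x; rewrite /g -/(g0 x) -sE -iterSr prednK //.
have [i Hi] := Hproj m g m2 homg idem.
have fE : forall w, f w = s (g w).
  by move=> w; rewrite /g -iterS prednK // itk.
rewrite !fE !Hi /u /v !ffunE.
apply/negP => /eqP /perm_inj /eqP.
by have := enum_valP i; rewrite inE => /negbTE ->.
Qed.
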